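(* Let $a,a',b,b':\mathbb{Z}\to\mathbb{C}$ be functions none of which is identically zero, and suppose $a(\mathbb{K})fb(\mathbb{K})=a'(\mathbb{K})fb'(\mathbb{K})$ for all $f\in\mathcal{D}$. Then there is a nonzero constant $\mu$ such that $a'(k)=\mu a(k)$ and $b'(k)=\frac1\mu b(k)$ for all $k\in\mathbb{Z}$.
   Context: Let $\{E_k\}$ be the canonical basis of $\ell^2(\mathbb{Z})$, $UE_k=E_{k+1}$, $\mathbb{K}E_k=kE_k$, and $a(\mathbb{K})E_k=a(k)E_k$ for $a:\mathbb{Z}\to\mathbb{C}$. $\mathcal{D}$ is the space of finite sums $f=\sum_nU^nf_n(\mathbb{K})$ with each $f_n:\mathbb{Z}\to\mathbb{C}$ finitely supported (operators on $\ell^2(\mathbb{Z})$ with finitely many nonzero matrix entries); the products are operator products. *)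

(* Defs.v *)
From HB Require Import structures.
From mathcomp Require Import all_boot all_order all_algebra.
From mathcomp Require Import complex.
From mathcomp Require Import Rstruct.
Set Implicit Arguments. Unset Strict Implicit. Unset Printing Implicit Defensive.
Import Order.TTheory GRing.Theory Num.Theory.
Local Open Scope ring_scope.

Definition C : Type := complex Rdefinitions.R.

(* An operator with finitely many nonzero matrix entries on l^2(Z) is
   represented by its matrix: opmat m k = <E_m, T E_k>. *)
Definition opmat := int -> int -> C.

Definition fin_supp (g : int -> C) : Prop :=
  exists s : seq int, forall k, k \notin s -> g k = 0.

(* Matrix of U^n g(K):  U^n g(K) E_k = g(k) E_{k+n}. *)
Definition shift_diag (n : int) (g : int -> C) : opmat :=
  fun m k => if m == k + n then g k else 0.

Definition opsum (l : seq (int * (int -> C))) : opmat :=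
  fun m k => \sum_(p <- l) shift_diag p.1 p.2 m k.

(* The space D of finite sums  sum_n U^n f_n(K)  with f_n finitely supported. *)
Definition inD (f : opmat) : Prop :=
  exists l : seq (int * (int -> C)),
    (forall p, List.In p l -> fin_supp p.2) /\ f = opsum l.

(* Matrix of the operator product a(K) f b(K):
   a(K) f b(K) E_k = b(k) sum_m f_{m,k} a(m) E_m. *)
Definition sandwich (a : int -> C) (f : opmat) (b : int -> C) : opmat :=
  fun m k => a m * f m k * b k.

(* Main.v *)
Require Import Defs.
From HB Require Import structures.
From mathcomp Require Import all_boot all_order all_algebra.
From mathcomp Require Import complex Rstruct.
Import GRing.Theory Num.Theory.
Local Open Scope ring_scope.

Lemma unit_eq (a a' b b' : int -> C) :
  (forall f : opmat, inD f -> sandwich a f b = sandwich a' f b') ->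
  forall m k, a m * b k = a' m * b' k.
Proof.
move=> H m k.
pose g : int -> C := fun j => if j == k then 1 else 0.
have hD : inD (opsum [:: (m - k, g)]).
  exists [:: (m - k, g)]; split => //.
  move=> p [<-|[]]; exists [:: k] => j; rewrite inE /g /=.
  by move/negbTE => ->.
have := congr1 (fun F => F m k) (H _ hD).
rewrite /sandwich /opsum big_seq1 /shift_diag /= /g.
have -> : (m == k + (m - k)) by rewrite addrC subrK.
by rewrite eqxx !mulr1.
Qed.

Theorem mainTheorem17 (a a' b b' : int -> C) :
  (exists k, a k != 0) -> (exists k, a' k != 0) ->
  (exists k, b k != 0) -> (exists k, b' k != 0) ->
  (forall f : opmat, inD f -> sandwich a f b = sandwich a' f b') ->
  exists mu : C, mu != 0 /\
    (forall k, a' k = mu * a k) /\ (forall k, b' k = mu^-1 * b k).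
Proof.
move=> [m0 am0] _ [k0 bk0] _ H.
have E := @unit_eq a a' b b' H.
have Hn : a' m0 * b' k0 != 0 by rewrite -E mulf_neq0.
have a'0 : a' m0 != 0 by move: Hn; rewrite mulf_eq0 negb_or => /andP[].
have b'0 : b' k0 != 0 by move: Hn; rewrite mulf_eq0 negb_or => /andP[].
have mu0 : b k0 / b' k0 != 0 by rewrite mulf_neq0 ?invr_neq0.
exists (b k0 / b' k0); split => //; split => k.
  apply: (mulIf b'0). by rewrite -E mulrAC divfK // mulrC.
have Em : a' m0 = b k0 / b' k0 * a m0.
  apply: (mulIf b'0). by rewrite -E mulrAC divfK // mulrC.
have Ek := E m0 k. rewrite Em in Ek.
apply: (mulfI mu0). rewrite mulVKf //.
apply: (mulfI am0). by rewrite Ek mulrCA mulrA.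
Qed.
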